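(* Let $\tilde L$ be a minimum-size counterexample. Then every element $x\in\tilde L\setminus\{0_{\tilde L},1_{\tilde L}\}$ is incomparable with at least three elements of $\tilde L$.
   Context: For a poset $P$, $x$ upper covers $y$ if $y<x$ with nothing strictly between; join-irreducible: upper covers exactly one element. For $x\in P$, ${\uparrow}x=\{y: x\le y\}$. $0_{\tilde L}$, $1_{\tilde L}$ are the least and greatest elements. A counterexample is a finite lattice $L$ with $|L|>1$ in which every join-irreducible $j$ satisfies $|{\uparrow}j|>|L|/2$; a minimum-size counterexample is a counterexample $\tilde L$ such that no counterexample has fewer elements. *)

(* Defs.v *)
From mathcomp Require Import all_boot all_order.
Set Implicit Arguments. Unset Strict Implicit. Unset Printing Implicit Defensive.
Import Order.TTheory.
Local Open Scope order_scope.

Definition covers (d : Order.disp_t) (L : finLatticeType d) (x y : L) : Prop :=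
  y < x /\ forall z : L, ~ (y < z /\ z < x).

Definition join_irreducible (d : Order.disp_t) (L : finLatticeType d) (j : L) : Prop :=
  exists y : L, covers j y /\ forall y' : L, covers j y' -> y' = y.

Definition upset (d : Order.disp_t) (L : finLatticeType d) (x : L) : {set L} :=
  [set y : L | x <= y].

Definition counterexample (d : Order.disp_t) (L : finLatticeType d) : Prop :=
  (1 < #|L|)%N /\
  forall j : L, join_irreducible j -> (#|L| < 2 * #|upset j|)%N.

Definition min_counterexample (d : Order.disp_t) (L : finLatticeType d) : Prop :=
  counterexample L /\
  forall (d' : Order.disp_t) (L' : finLatticeType d'),
    counterexample L' -> (#|L| <= #|L'|)%N.

Definition incomparables (d : Order.disp_t) (L : finLatticeType d) (x : L) : {set L} :=
  [set y : L | ~~ (x >=< y)].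

(* Main.v *)
From HB Require Import structures.
Require Import Defs.
From mathcomp Require Import all_boot all_order.
From mathcomp Require Import zify.
From Stdlib Require Import Lia Classical.
Set Implicit Arguments. Unset Strict Implicit. Unset Printing Implicit Defensive.
Import Order.TTheory.
Local Open Scope order_scope.
Section Up.
Context {d : Order.disp_t} (L : finLatticeType d) (x : L).
Definition upT := {y : L | x <= y}.
HB.instance Definition _ := SubType.on upT.
HB.instance Definition _ := Finite.on upT.
Lemma upI : meet_closed (fun y : L => x <= y).
Proof. move=> a b. rewrite !unfold_in /= => xa xb. by rewrite lexI xa xb. Qed.
Lemma upU : join_closed (fun y : L => x <= y).
Proof. move=> a b. rewrite !unfold_in /= => xa _. by rewrite (le_trans xa (leUl _ _)). Qed.
HB.instance Definition _ := Order.SubChoice_isSubLattice.Build d L (fun y : L => x <= y) d upT upI upU.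
Lemma upleE (a b : upT) : (a <= b) = (val a <= val b).
Proof. by []. Qed.
Lemma upltE (a b : upT) : (a < b) = (val a < val b).
Proof. by []. Qed.
End Up.

Section Core.
Context {d : Order.disp_t} {L : finLatticeType d}.
Implicit Types (a b t u v w x y k : L).

Lemma incE x t : (t \in incomparables x) = ~~ (x <= t) && ~~ (t <= x).
Proof. by rewrite inE /Order.comparable negb_or. Qed.

Lemma upE x t : (t \in upset x) = (x <= t).
Proof. by rewrite inE. Qed.

Lemma tri x t : [\/ x <= t, t <= x | t \in incomparables x].
Proof.
rewrite incE; case: (boolP (x <= t)) => h1; first by constructor 1.
case: (boolP (t <= x)) => h2; first by constructor 2. by constructor 3.
Qed.

Lemma JI_of a w : a < w -> (forall t, t < w -> t <= a) -> join_irreducible w.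
Proof.
move=> aw H; exists a; split.
  split => // z [az zw]; by move: (lt_le_trans az (H z zw)); rewrite ltxx.
move=> y' [y'w ncov]; have y'a := H y' y'w.
apply/eqP; rewrite eq_le y'a /=; case: (boolP (a <= y')) => // hn.
exfalso; apply: (ncov a); split => //; by rewrite lt_leAnge y'a hn.
Qed.

Lemma two_inc x a b t : (#|incomparables x| <= 2)%N ->
  a \in incomparables x -> b \in incomparables x -> a != b ->
  t \in incomparables x -> t = a \/ t = b.
Proof.
move=> hc ha hb ab ht.
case: (eqVneq t a) => [->|ta]; first by left.
case: (eqVneq t b) => [->|tb]; first by right.
exfalso.
have : (#|t |: [set a; b]| <= #|incomparables x|)%N.
  apply: subset_leq_card; apply/subsetP => z /setU1P[->|/set2P[]->] //.
rewrite cardsU1 cards2 ab !inE (negbTE ta) (negbTE tb) /=.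
move=> h; have := leq_trans h hc; by [].
Qed.

Lemma card_bound (A S T : {set L}) :
  (A \subset S :|: T) -> (#|A| <= #|S| + #|T|)%N.
Proof.
move=> h; apply: (leq_trans (subset_leq_card h)).
by have [] := leq_card_setU S T.
Qed.

Lemma low1 a (A : {set L}) : a \notin A -> (#|A|.+1 <= #|L|)%N.
Proof. move=> h; have := max_card (a |: A); by rewrite cardsU1 h. Qed.

Lemma low2 a b (A : {set L}) : a != b -> a \notin A -> b \notin A -> (#|A|.+2 <= #|L|)%N.
Proof.
move=> ab ha hb; have := max_card (a |: (b |: A)).
by rewrite cardsU1 cardsU1 !inE (negbTE ha) (negbTE hb) (negbTE ab).
Qed.

Lemma low4 a b c e (A : {set L}) : a != b -> a != c -> a != e -> b != c -> b != e -> c != e ->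
  a \notin A -> b \notin A -> c \notin A -> e \notin A -> (#|A|.+4 <= #|L|)%N.
Proof.
move=> ab ac ae bc be ce ha hb hc he; have := max_card (a |: (b |: (c |: (e |: A)))).
by rewrite !cardsU1 !inE (negbTE ha) (negbTE hb) (negbTE hc) (negbTE he) (negbTE ab) (negbTE ac) (negbTE ae) (negbTE bc) (negbTE be) (negbTE ce).
Qed.

Lemma A1 n bv bk bx : (n < 2 * bv -> bv <= 1 + bk -> 2 * bk <= bx -> bx.+2 <= n -> False)%N.
Proof. lia. Qed.
Lemma A2 n bv bk bx : (n < 2 * bv -> bv <= 2 + bk -> 2 * bk <= bx -> bx.+4 <= n -> False)%N.
Proof. lia. Qed.
Lemma A3 n bv bk bkd bx : (n < 2 * bv -> bv <= 1 + bkd -> bk = 1 + bkd -> 2 * bk <= bx -> bx.+1 <= n -> False)%N.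
Proof. lia. Qed.

Lemma core x k v :
  (forall j : L, join_irreducible j -> (#|L| < 2 * #|upset j|)%N) ->
  (#|incomparables x| <= 2)%N ->
  covers k v -> x < k -> v \in incomparables x ->
  (2 * #|upset k| <= #|upset x|)%N -> False.
Proof.
move=> hJ hI [vk ncov] xk vI hk.
have := vI; rewrite incE => /andP[nxv nvx].
have xvk : x `|` v = k.
  apply/eqP; rewrite eq_le leUx (ltW xk) (ltW vk) /=.
  case: (boolP (k <= x `|` v)) => // H; exfalso; apply: (ncov (x `|` v)); split.
    rewrite lt_leAnge leUr /=; apply: contra nxv => h; exact: le_trans (leUl _ _) h.
  by rewrite lt_leAnge leUx (ltW xk) (ltW vk).
have geK t : x <= t -> v <= t -> k <= t by move=> h1 h2; rewrite -xvk leUx h1 h2.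
have nB t : t \in incomparables x -> t \notin upset x by rewrite incE upE => /andP[].
have nBm t : ~~ (x <= t) -> x `&` t \notin upset x.
  by move=> h; rewrite upE; apply: contra h => h'; exact: le_trans h' (leIr _ _).
have cardL (S : {set L}) : (#|S :|: upset x| <= #|L|)%N by exact: max_card.
pose a := x `&` v.
case: (pickP (fun w => (w \in incomparables x) && (w < v))) => [w /andP[wI wv] | nolow].
-
  have wnv : w != v by rewrite lt_eqF.
  have oth t : t \in incomparables x -> t = w \/ t = v by apply: two_inc.
  have := wI; rewrite incE => /andP[nxw nwx].
  case: (boolP (a <= w)) => aw.
  + have Jv : join_irreducible v.
      apply: (JI_of wv) => t tv.
      case: (tri x t) => [xt | tx | tI].
      * by move: nxv; rewrite (le_trans xt (ltW tv)).
      * apply: le_trans aw; by rewrite lexI tx (ltW tv).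
      * by case: (oth _ tI) => ?; subst t; [rewrite lexx | rewrite ltxx in tv].
    have sub : upset v \subset [set v] :|: upset k.
      apply/subsetP => t; rewrite upE => vt; rewrite !inE.
      case: (tri x t) => [xt | tx | tI].
      * by rewrite (geK _ xt vt) !orbT.
      * by move: nvx; rewrite (le_trans vt tx).
      * by case: (oth _ tI) => ?; subst t; [move: wv; rewrite lt_leAnge vt andbF | rewrite eqxx].
    have h1 := card_bound sub; rewrite cards1 in h1.
    have h2 := low2 wnv (nB _ wI) (nB _ vI).
    exact: (A1 (hJ _ Jv) h1 hk h2).
  + have xww : x `&` w < w.
      rewrite lt_leAnge leIr /=; apply: contra nwx => h; exact: le_trans h (leIl _ _).
    have Jw : join_irreducible w.
      apply: (JI_of xww) => t tw.
      case: (tri x t) => [xt | tx | tI].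
      * by move: nxw; rewrite (le_trans xt (ltW tw)).
      * by rewrite lexI tx (ltW tw).
      * case: (oth _ tI) => ?; subst t; first by rewrite ltxx in tw.
        by move: (lt_trans tw wv); rewrite ltxx.
    have vle : v <= x `|` w.
      set m := v `&` (x `|` w).
      case: (boolP (v <= m)) => [h|h]; first exact: le_trans h (leIr _ _).
      exfalso. have mv : m < v by rewrite lt_leAnge leIl h.
      have wm : w <= m by rewrite lexI (ltW wv) leUr.
      have am : a <= m by rewrite lexI leIr (le_trans (leIl _ _) (leUl _ _)).
      case: (tri x m) => [xm | mx | mI].
      * by move: nxv; rewrite (le_trans xm (ltW mv)).
      * by move: nwx; rewrite (le_trans wm mx).
      * case: (oth _ mI) => Hm; first by move: am; rewrite Hm (negbTE aw).
        by rewrite Hm ltxx in mv.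
    have kle : k <= x `|` w by rewrite -xvk leUx leUl vle.
    have sub : upset w \subset [set w; v] :|: upset k.
      apply/subsetP => t; rewrite upE => wt; rewrite !inE.
      case: (tri x t) => [xt | tx | tI].
      * by rewrite (le_trans kle _) ?orbT // leUx xt wt.
      * by move: nwx; rewrite (le_trans wt tx).
      * by case: (oth _ tI) => ?; subst t; rewrite eqxx ?orbT.
    have h1 := card_bound sub; rewrite cards2 wnv in h1.
    have h2 : (#|upset x|.+4 <= #|L|)%N.
      apply: (@low4 w v a (x `&` w)) => //.
      - by apply: contraNneq nwx => ->; exact: leIl.
      - by apply: contraNneq nwx => ->; exact: leIl.
      - by apply: contraNneq nvx => ->; exact: leIl.
      - by apply: contraNneq nvx => ->; exact: leIl.
      - by apply: contraNneq aw => ->; exact: leIr.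
      - exact: nB.
      - exact: nB.
      - exact: nBm.
      - exact: nBm.
    exact: (A2 (hJ _ Jw) h1 hk h2).
- have av : a < v.
    rewrite lt_leAnge leIr /=; apply: contra nvx => h; exact: le_trans h (leIl _ _).
  have Jv : join_irreducible v.
    apply: (JI_of av) => t tv.
    case: (tri x t) => [xt | tx | tI].
    * by move: nxv; rewrite (le_trans xt (ltW tv)).
    * by rewrite lexI tx (ltW tv).
    * by move: (nolow t); rewrite tI tv.
  have nva : v != a by apply: contraNneq nvx => ->; exact: leIl.
  case: (pickP (fun u => (u \in incomparables x) && (v < u))) => [u /andP[uI vu] | noup].
  + have unv : u != v by rewrite gt_eqF.
    have oth t : t \in incomparables x -> t = u \/ t = v by apply: two_inc.
    have := uI; rewrite incE => /andP[nxu nux].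
    case: (boolP (x `&` u <= v)) => au.
    * have Ju : join_irreducible u.
        apply: (JI_of vu) => t tu.
        case: (tri x t) => [xt | tx | tI].
        - by move: nxu; rewrite (le_trans xt (ltW tu)).
        - apply: le_trans au; by rewrite lexI tx (ltW tu).
        - case: (oth _ tI) => ?; subst t; first by rewrite ltxx in tu.
          exact: lexx.
      have kNu : ~~ (u <= k).
        apply/negP => uk; case: (eqVneq u k) => uk'.
          by move: nxu; rewrite uk' (ltW xk).
        by apply: (ncov u); split => //; rewrite lt_neqAle uk' uk.
      have sub : upset u \subset [set u] :|: (upset k :\ k).
        apply/subsetP => t; rewrite upE => ut; rewrite !inE.
        case: (tri x t) => [xt | tx | tI].
        - rewrite (geK _ xt (le_trans (ltW vu) ut)) andbT; apply/orP; right.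
          by apply: contraNneq kNu => <-.

        - by move: nux; rewrite (le_trans ut tx).
        - case: (oth _ tI) => ?; subst t; first by rewrite eqxx.
          by move: vu; rewrite lt_leAnge ut andbF.
      have h1 : (#|upset u| <= 1 + #|upset k :\ k|)%N.
        by have := card_bound sub; rewrite cards1.
      have h3 := cardsD1 k (upset k); rewrite upE lexx in h3.
      have h2 := low1 (nB _ vI).
      exact: (A3 (hJ _ Ju) h1 h3 hk h2).
    * have sub : upset v \subset [set v; u] :|: upset k.
        apply/subsetP => t; rewrite upE => vt; rewrite !inE.
        case: (tri x t) => [xt | tx | tI].
        - by rewrite (geK _ xt vt) !orbT.
        - by move: nvx; rewrite (le_trans vt tx).
        - by case: (oth _ tI) => ?; subst t; rewrite eqxx ?orbT.
      have h1 := card_bound sub; rewrite cards2 eq_sym unv in h1.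
      have h2 : (#|upset x|.+4 <= #|L|)%N.
        apply: (@low4 v u a (x `&` u)) => //.
        - by rewrite eq_sym.
        - by apply: contraNneq nvx => ->; exact: leIl.
        - by apply: contraNneq nux => ->; exact: leIl.
        - by apply: contraNneq nux => ->; exact: leIl.
        - by apply: contraNneq au => <-; exact: leIr.
        - exact: nB.
        - exact: nB.
        - exact: nBm.
        - exact: nBm.
      exact: (A2 (hJ _ Jv) h1 hk h2).
  + have sub : upset v \subset [set v] :|: upset k.
      apply/subsetP => t; rewrite upE => vt; rewrite !inE.
      case: (tri x t) => [xt | tx | tI].
      - by rewrite (geK _ xt vt) !orbT.
      - by move: nvx; rewrite (le_trans vt tx).
      - case: (eqVneq t v) => [->|tv]; first by rewrite ?eqxx.
        by move: (noup t); rewrite tI lt_neqAle eq_sym tv vt.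
    have h1 := card_bound sub; rewrite cards1 in h1.
    have h2 := low2 nva (nB _ vI) (nBm _ nxv).
    exact: (A1 (hJ _ Jv) h1 hk h2).
Qed.
End Core.

Lemma exists_cover d (L : finLatticeType d) (a b : L) :
  a < b -> exists c, covers b c /\ a <= c.
Proof.
move=> ab.
pose P := fun i : L => (a <= i) && (i < b).
have Pa : P a by rewrite /P lexx ab.
case: (@arg_maxnP L a P (fun i => #|[set z : L | z <= i]|) Pa) => c /andP[ac cb] cmax.
exists c; split => //; split => // z [cz zb].
have := cmax z; rewrite /P (le_trans ac (ltW cz)) zb => /(_ isT).
apply/negP; rewrite -ltnNge; apply: proper_card; apply/properP; split.
  by apply/subsetP => t; rewrite !inE => tc; exact: le_trans tc (ltW cz).
by exists z; rewrite !inE ?lexx // lt_geF.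
Qed.

Theorem corollary2p14 (d : Order.disp_t) (L : finLatticeType d) :
  min_counterexample L ->
  forall x : L,
    ~ (forall y : L, x <= y) ->   (* x is not the least element 0_L *)
    ~ (forall y : L, y <= x) ->   (* x is not the greatest element 1_L *)
    (3 <= #|incomparables x|)%N.
Proof.
move=> [[hL hJ] hmin] x nbot ntop.
rewrite leqNgt ltnS; apply/negP => hI.
have [y0 ny0] : exists y0, ~ x <= y0 by apply: not_all_ex_not.
have [y1 ny1] : exists y1, ~ y1 <= x by apply: not_all_ex_not.
pose B : finLatticeType d := upT x.
have cardB : #|B| = #|upset x|.
  rewrite card_sig; apply: eq_card => y; by rewrite !inE.
have ltB : (#|upset x| < #|L|)%N.
  apply: (@low1 _ _ (x `&` y0)); rewrite upE; apply/negP => h; apply: ny0.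
  exact: le_trans h (leIr _ _).
have B1 : (1 < #|B|)%N.
  rewrite cardB; have xne : x != x `|` y1.
    by apply/negP => /eqP h; apply: ny1; rewrite h leUr.
  have : (#|[set x; x `|` y1]| <= #|upset x|)%N.
    by apply: subset_leq_card; apply/subsetP => z /set2P[]->; rewrite upE ?lexx ?leUl.
  by rewrite cards2 xne.
have nCE : ~ counterexample B.
  move=> CE; have := hmin _ _ CE; rewrite cardB; lia.
have [k [Jk hk]] : exists k : B, join_irreducible k /\ ~~ (#|B| < 2 * #|upset k|)%N.
  apply: NNPP => H; apply: nCE; split => // j Jj; apply: contraT => hn; exfalso; apply: H.
  by exists j; split.
have upcard : #|upset k| = #|upset (val k)|.
  have -> : upset (val k) = [set val z | z in upset k].
    apply/setP => y; rewrite inE; apply/idP/imsetP.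
      move=> ky; have xy : x <= y := le_trans (valP k) ky.
      by exists (exist _ y xy); rewrite // inE.
    by move=> [z]; rewrite inE => kz ->.
  by rewrite card_imset //; exact: val_inj.
rewrite cardB upcard -leqNgt in hk.
have [c [covc uniqc]] := Jk.
have xk : x < val k.
  rewrite lt_leAnge (valP k) /=; apply/negP => kx.
  have := covc.1; rewrite upltE => ck.
  by move: (lt_le_trans ck kx); rewrite lt_leAnge (valP c) andbF.
have notJ : ~ join_irreducible (val k).
  move=> J; have := hJ _ J; lia.
have [v [covv vI]] : exists v, covers (val k) v /\ v \in incomparables x.
  apply: NNPP => H; apply: notJ.
  have [c' [covc' cc']] := exists_cover (covc.1 : val c < val k).
  have xc' : x <= c' := le_trans (valP c) cc'.
  have lift (y : L) (xy : x <= y) : covers (val k) y -> exist _ y xy = c.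
    move=> [yk ncov]; apply: uniqc; split; first by rewrite upltE.
    move=> z [yz zk]; apply: (ncov (val z)); split; by rewrite -?upltE.
  exists c'; split => // y' covy'.
  case: (tri x y') => [xy' | y'x | y'I].
  - have e1 := f_equal val (lift _ xy' covy'); have e2 := f_equal val (lift _ xc' covc').
    by rewrite /= in e1 e2; rewrite e1 e2.
  - case: (eqVneq y' x) => [e|ne].
      have xy' : x <= y' by rewrite e.
      have e1 := f_equal val (lift _ xy' covy'); have e2 := f_equal val (lift _ xc' covc').
      by rewrite /= in e1 e2; rewrite e1 e2.
    exfalso; apply: (proj2 covy' x); split => //; by rewrite lt_neqAle ne y'x.
  - by exfalso; apply: H; exists y'.
exact: (core hJ hI covv xk vI hk).
Qed.
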